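(* Let $M=15$. For any integers $i,j\ge1$ and any $J\in\mathcal D_i$, the set $J\cap\widehat Q_i^j$ is a union of at most $M$ intervals in $\mathcal D_{i+j}$. Consequently, $\widehat Q_i^j$ consists of at most $M2^i$ intervals in $\mathcal D_{i+j}$, and $|Q_i^j|\le|\widehat Q_i^j|\le M2^{-j}$.
   Context: $\mathbb T=\mathbb R/\mathbb Z\cong[0,1)$, $Tx=2x\bmod1$, $d(t,s)=\|t-s\|$ the distance on $\mathbb T$. $\mathcal D_k$ is the collection of dyadic intervals $[m/2^k,(m+1)/2^k)$, $0\le m<2^k$. For $i,j\ge1$, $Q_i^j=\{x\in\mathbb T:d(T^ix,x)\le2^{-j}\}$, and $\widehat Q_i^j$ is the union of all intervals in $\mathcal D_{i+j}$ that intersect $Q_i^j$. $|\cdot|$ denotes Lebesgue measure. *)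

(* Defs.v *)
From HB Require Import structures.
From mathcomp Require Import all_boot all_order all_algebra.
From mathcomp Require Import all_classical all_reals all_analysis.
Set Implicit Arguments. Unset Strict Implicit. Unset Printing Implicit Defensive.
Import Order.TTheory GRing.Theory Num.Theory.
Local Open Scope classical_set_scope.
Local Open Scope ring_scope.

Section Defs.
Variable R : realType.

Definition frac (x : R) : R := x - (Num.floor x)%:~R.

Definition Tmap (x : R) : R := frac (2 * x).

Definition dT (t s : R) : R := Num.min (frac (t - s)) (1 - frac (t - s)).

(* the circle, as [0,1) *)
Definition torus : set R := [set x | 0 <= x < 1].

Definition Q (i j : nat) : set R :=
  [set x | torus x /\ dT (iter i Tmap x) x <= (2 ^- j)].

Definition Dint (k m : nat) : set R :=
  [set x | m%:R / 2 ^+ k <= x < m.+1%:R / 2 ^+ k].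

Definition Qhat (i j : nat) : set R :=
  [set x | exists m : nat, (m < 2 ^ (i + j))%N /\
              Dint (i + j) m `&` Q i j !=set0 /\ Dint (i + j) m x].

Definition Dunion (k : nat) (s : seq nat) : set R :=
  \big[setU/set0]_(m <- s) Dint k m.

End Defs.

(* Main.v *)
Require Import Defs.
From HB Require Import structures.
From mathcomp Require Import all_boot all_order all_algebra.
From mathcomp Require Import all_classical all_reals all_analysis.
From mathcomp Require Import ring lra zify.
Import Order.TTheory GRing.Theory Num.Theory.
Local Open Scope classical_set_scope.
Local Open Scope ring_scope.
Section S.
Variable R : realType.

Lemma iterT (x : R) i : exists z : int, iter i (@Tmap R) x = 2 ^+ i * x - z%:~R.
Proof.
elim: i => [|i [z IH]]; first by exists 0; rewrite /= mul1r subr0.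
exists (2 * z + Num.floor (2 * iter i (@Tmap R) x)).
rewrite iterS /Tmap /frac IH intrD intrM exprS.
have -> : (2%:Z)%:~R = 2 :> R by [].
rewrite /Defs.frac; ring.
Qed.

Lemma dT_le (t s e : R) : dT t s <= e -> exists k : int, `|t - s - k%:~R| <= e.
Proof.
rewrite /dT /Defs.frac ge_min.
have := floor_itv (t - s); set f := Num.floor (t - s) => /andP [h1 h2].
rewrite intrD /= in h2.
case/orP => h.
  exists f; rewrite ler_norml; apply/andP; split; lra.
exists (f + 1); rewrite ler_norml intrD /=; apply/andP; split; lra.
Qed.

Lemma Q_char i j (x : R) : Q i j x ->
  0 <= x < 1 /\ exists k : int, `|(2 ^+ i - 1) * x - k%:~R| <= 2 ^- j.
Proof.
case=> hT hd; split => //.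
have [z hz] := iterT x i.
have [k hk] := dT_le _ _ _ hd.
exists (z + k); move: hk; rewrite hz intrD.
by have -> : 2 ^+ i * x - z%:~R - x - k%:~R = (2 ^+ i - 1) * x - (z%:~R + k%:~R) by ring.
Qed.
End S.
Section S2.
Variable R : realType.

Lemma count5 (N c : R) (s : seq nat) : 0 < N -> uniq s ->
  (forall m, m \in s -> c < N * m%:R <= c + 5 * N) -> (size s <= 5)%N.
Proof.
move=> N0 us H; case: s us H => [//|m0 s] us H.
have ex : exists m, m \in m0 :: s by exists m0; rewrite inE eqxx.
case: (ex_minnP ex) => a ain amin.
apply: (leq_trans (uniq_leq_size us (_ : {subset m0 :: s <= iota a 5}))).
  2: by rewrite size_iota.
move=> m ms; rewrite mem_iota; apply/andP; split; first exact: amin.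
have /andP[h1 _] := H a ain; have /andP[_ h2] := H m ms.
have : m%:R < a%:R + 5 :> R by nra.
by rewrite -natrD ltr_nat.
Qed.

Lemma count10 (N c1 c2 : R) (s : seq nat) : 0 < N -> uniq s ->
  (forall m, m \in s -> (c1 < N * m%:R <= c1 + 5 * N) || (c2 < N * m%:R <= c2 + 5 * N)) ->
  (size s <= 10)%N.
Proof.
move=> N0 us H.
pose p := fun m : nat => (c1 < N * m%:R <= c1 + 5 * N).
rewrite -(count_predC p s) -!size_filter.
have -> : 10%N = (5 + 5)%N by [].
apply: leq_add.
  apply: (@count5 N c1) => //; first exact: filter_uniq.
  by move=> m; rewrite mem_filter => /andP[].
apply: (@count5 N c2) => //; first exact: filter_uniq.
move=> m; rewrite mem_filter => /andP[/= hp ms].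
by have := H m ms; rewrite /p in hp; rewrite (negbTE hp).
Qed.

Lemma DunionP k (s : seq nat) (x : R) :
  Dunion k s x <-> exists2 m, m \in s & Dint k m x.
Proof.
elim: s => [|m s IH]; rewrite /Dunion.
  by rewrite big_nil; split => [//|[]].
rewrite big_cons; split.
  case=> [h|]; first by exists m; rewrite ?inE ?eqxx.
  by move/IH => [m' ms' h]; exists m'; rewrite // inE ms' orbT.
move=> [m' ]; rewrite inE => /orP[/eqP -> h|ms' h]; first by left.
by right; apply/IH; exists m'.
Qed.
End S2.
Section S3.
Variable R : realType.

Definition Pm (i j m : nat) : bool := `[< @Dint R (i + j) m `&` @Q R i j !=set0 >].
Definition blk i j n := seq.filter (Pm i j) (iota (n * 2 ^ j) (2 ^ j)).

Lemma two_pow_ge2 k : (1 <= k)%N -> 2 <= (2 : R) ^+ k.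
Proof.
case: k => [//|k] _; rewrite exprS.
have : 1 <= (2 : R) ^+ k by apply: exprn_ege1; lra.
move=> h; nra.
Qed.

Lemma DintE k m (x : R) : Dint k m x <-> m%:R <= x * 2 ^+ k < m.+1%:R.
Proof.
have K0 : 0 < (2 : R) ^+ k by apply: exprn_gt0; lra.
by rewrite /Dint /= ler_pdivrMr // ltr_pdivlMr.
Qed.

Lemma blk_size i j n : (1 <= i)%N -> (1 <= j)%N -> (size (blk i j n) <= 15)%N.
Proof.
move=> i1 j1.
have E2 := two_pow_ge2 _ i1; have F2 := two_pow_ge2 _ j1.
set E := (2 : R) ^+ i in E2 *; set F := (2 : R) ^+ j in F2 *.
set N := E - 1.
set eps := F^-1.
have N0 : 0 < N by rewrite /N; lra.
have F0 : 0 < F by lra.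
have E0 : 0 < E by lra.
have epsF : eps * F = 1 by rewrite /eps mulVf // gt_eqF.
have eps0 : 0 < eps by rewrite /eps invr_gt0.
have eps2 : 2 * eps <= 1 by nra.
pose r := N * n%:R / E - eps.
pose k0 := Num.ceil r.
pose K := E * F.
apply: (@leq_trans 10); last by [].
apply: (@count10 R N (k0%:~R * K - E - N) ((k0 + 1)%:~R * K - E - N)) => //.
  exact/filter_uniq/iota_uniq.
move=> m; rewrite mem_filter mem_iota => /andP[/asboolP [x [/DintE hD hQ]] /andP[lo hi]].
have [x01 [k hk]] := @Q_char R i j x hQ.
rewrite -/E -/N -/F -/eps in hk.
rewrite exprD -/E -/F -/K in hD.
move: hk; rewrite ler_norml => /andP[hk1 hk2].
move: lo hi; rewrite -!(ler_nat R) -addn1 !natrD !natrM natrX -/F => lo hi.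
move: hD; rewrite -addn1 natrD => hD.
have hx1 : n%:R <= x * E.
  have : n%:R * F <= x * E * F by move: hD => /andP[h _]; rewrite /K in h; lra.
  by rewrite ler_pM2r.
have hx2 : x * E < n%:R + 1.
  have : x * E * F < (n%:R + 1) * F.
    move: hD => /andP[_ h]; rewrite /K in h.
    nra.
  by rewrite ltr_pM2r.
have K0 : 0 < K by rewrite /K; nra.
have KE : K * eps = E by rewrite /K -mulrA [F * eps]mulrC epsF mulr1.
have hD1 : m%:R <= x * K by move: hD => /andP[h _].
have hD2 : x * K < m%:R + 1 by move: hD => /andP[_ h].
have hA : N * n%:R / E <= N * x by rewrite ler_pdivrMr //; nra.
have hr_k : r <= k%:~R by rewrite /r; lra.
have hB : N * x < N * n%:R / E + 1.
  have -> : N * n%:R / E + 1 = (N * n%:R + E) / E.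
    by rewrite [RHS]mulrDl (divff (lt0r_neq0 E0)).
  rewrite ltr_pdivlMr //; rewrite /N; nra.
have hk_lt : k%:~R < r + 2 by rewrite /r; lra.
have hk0 : k0 <= k by rewrite /k0 ceil_le_int.
have hk0' : k < k0 + 2.
  rewrite -(ltr_int R) intrD; have /andP[_ h] := ceil_itv r; rewrite -/k0 in h; lra.
have key : forall c : int, c = k ->
    (c%:~R * K - E - N < N * m%:R <= c%:~R * K - E - N + 5 * N).
  move=> c ->.
  have a1 : N * m%:R <= N * (x * K) by nra.
  have a2 : K * (N * x) <= K * (k%:~R + eps) by nra.
  have a3 : N * (x * K - 1) < N * m%:R by nra.
  have a4 : K * (k%:~R - eps) <= K * (N * x) by nra.
  have hN : N = E - 1 by [].
  clearbody r k0 K N eps E F.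
  clear - a1 a2 a3 a4 KE E2 hN.
  apply/andP; split; lra.
have [hk|hk] : k0 = k \/ k0 + 1 = k by clear - hk0 hk0'; lia.
  by rewrite (key _ hk).
by rewrite (key _ hk) orbT.
Qed.
End S3.
Section S4.
Variable R : realType.

Lemma Dint_nest i j n m (x : R) : Dint (i + j) m x ->
  (Dint i n x <-> (n * 2 ^ j <= m < n * 2 ^ j + 2 ^ j)%N).
Proof.
have F0 : 0 < (2 : R) ^+ j by apply: exprn_gt0; lra.
have E0 : 0 < (2 : R) ^+ i by apply: exprn_gt0; lra.
move/DintE; rewrite exprD -[m.+1]addn1 natrD => /andP[h1 h2].
rewrite DintE -[n.+1]addn1 natrD.
split.
  move=> /andP[g1 g2].
  apply/andP; split.
    rewrite -ltnS -(ltr_nat R) -[m.+1]addn1 natrD natrM natrX.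
    have : n%:R * 2 ^+ j <= x * 2 ^+ i * 2 ^+ j :> R by rewrite ler_pM2r.
    rewrite mulrA in h2; lra.
  rewrite addn1 -(ltr_nat R) !natrD natrM natrX.
  have : x * 2 ^+ i * 2 ^+ j < (n%:R + 1) * 2 ^+ j :> R by rewrite ltr_pM2r.
  rewrite mulrA in h1; lra.
move=> /andP[g1 g2].
move: g1 g2; rewrite -!(ler_nat R) !natrD natrM natrX => g1 g2.
apply/andP; split.
  rewrite -(ler_pM2r F0); rewrite mulrA in h1; lra.
rewrite -(ltr_pM2r F0); rewrite mulrA in h2; lra.
Qed.

Lemma blk_eq i j n : (n < 2 ^ i)%N ->
  @Dint R i n `&` @Qhat R i j = Dunion (i + j) (blk R i j n).
Proof.
move=> ni; apply/seteqP; split => x.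
  move=> [hn [m [mlt [hne hx]]]].
  apply/DunionP; exists m => //.
  rewrite mem_filter mem_iota; apply/andP; split.
    exact/asboolP.
  exact: (proj1 (@Dint_nest i j n m x hx) hn).
move/DunionP => [m]; rewrite mem_filter mem_iota => /andP[/asboolP hne hm] hx.
split; first exact: (proj2 (@Dint_nest i j n m x hx) hm).
exists m; split => //.
move: hm => /andP[_ hm]; apply: (leq_trans hm).
by rewrite expnD -mulSnr leq_mul2r ni orbT.
Qed.

Lemma blk_all i j n : (n < 2 ^ i)%N -> all (fun m => m < 2 ^ (i + j))%N (blk R i j n).
Proof.
move=> ni; apply/allP => m; rewrite mem_filter mem_iota => /andP[_ /andP[_ hm]].
apply: (leq_trans hm).
by rewrite expnD -mulSnr leq_mul2r ni orbT.
Qed.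
End S4.
Section S5.
Variable R : realType.
Local Open Scope ereal_scope.

Lemma Dint_itv k m : @Dint R k m = [set` `[(m%:R / 2 ^+ k)%R, (m.+1%:R / 2 ^+ k)%R[%R].
Proof. by apply/seteqP; split => x; rewrite /Dint /= in_itv. Qed.

Lemma Dint_meas k m : (@lebesgue_measure R) (@Dint R k m) = ((2 ^- k)%R)%:E.
Proof.
have K0 : (0 < (2 : R) ^+ k)%R by apply: exprn_gt0; lra.
rewrite Dint_itv lebesgue_measure_itv /=.
rewrite lte_fin.
have -> : (m%:R / 2 ^+ k < m.+1%:R / 2 ^+ k :> R)%R.
  by rewrite ltr_pM2r ?invr_gt0 // ltr_nat.
rewrite -EFinD; congr (_%:E).
by rewrite -mulrBl -natrB // subSnn mul1r.
Qed.

Lemma Dunion_meas k s : (@lebesgue_measure R) (@Dunion R k s) <= ((size s)%:R * 2 ^- k)%:E.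
Proof.
elim: s => [|m s IH].
  by rewrite /Dunion big_nil measure0 /= mul0r.
rewrite /Dunion big_cons.
have mD : forall t, measurable (@Dunion R k t).
  elim=> [|m' t IHt]; first by rewrite /Dunion big_nil.
  rewrite /Dunion big_cons; apply: measurableU => //.
  by rewrite Dint_itv; exact: measurable_itv.
apply: le_trans (measureU2 _ _ _) _.
- by rewrite Dint_itv; exact: measurable_itv.
- exact: mD.
have h1 : (@lebesgue_measure R) (@Dint R k m) <= ((2 ^- k)%R)%:E by rewrite Dint_meas.
apply: le_trans (leeD h1 IH) _.
by rewrite -EFinD lee_fin /= -[(size s).+1]add1n natrD mulrDl mul1r.
Qed.
End S5.
Theorem lemma4p2 (R : realType) :
  let M := 15%N in
  (forall (i j : nat), (1 <= i)%N -> (1 <= j)%N ->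
     forall n : nat, (n < 2 ^ i)%N ->
       exists s : seq nat, (size s <= M)%N /\ all (fun m => m < 2 ^ (i + j))%N s /\
         @Dint R i n `&` @Qhat R i j = @Dunion R (i + j) s)
  /\
  (forall (i j : nat), (1 <= i)%N -> (1 <= j)%N ->
     (exists s : seq nat, (size s <= M * 2 ^ i)%N /\ all (fun m => m < 2 ^ (i + j))%N s /\
         @Qhat R i j = @Dunion R (i + j) s)
     /\ ((@lebesgue_measure R) (@Q R i j) <= (@lebesgue_measure R) (@Qhat R i j))%E
     /\ ((@lebesgue_measure R) (@Qhat R i j) <= (M%:R * 2 ^- j)%:E)%E).
Proof.
move=> M; split.
  move=> i j i1 j1 n ni; exists (blk R i j n); split; first exact: blk_size.
  by split; [exact: blk_all | exact: blk_eq].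
move=> i j i1 j1.
pose s := flatten [seq blk R i j n | n <- iota 0 (2 ^ i)].
have hsz : (size s <= M * 2 ^ i)%N.
  rewrite /s -[X in (_ <= _ * X)%N](size_iota 0).
  elim: (iota 0 (2 ^ i)) => [//|n l IH] /=.
  by rewrite size_cat mulnS leq_add // blk_size.
have hall : all (fun m => m < 2 ^ (i + j))%N s.
  apply/allP => m /flatten_mapP [n]; rewrite mem_iota add0n => /andP[_ ni] mb.
  by have /allP := @blk_all R i j n ni; apply.
have hK0 : (0 < 2 ^ j)%N by rewrite expn_gt0.
have hQ : @Qhat R i j = @Dunion R (i + j) s.
  apply/seteqP; split => x.
    move=> hx; have [m [mlt [hne hxm]]] := hx.
    pose n := (m %/ 2 ^ j)%N.
    have ni : (n < 2 ^ i)%N by rewrite ltn_divLR // -expnD.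
    have hn : @Dint R i n x.
      apply: (proj2 (@Dint_nest R i j n m x hxm)); apply/andP; split; first exact: leq_trunc_div.
      by rewrite -mulSnr ltn_ceil.
    have : (@Dint R i n `&` @Qhat R i j) x by [].
    rewrite blk_eq // => /DunionP [m' m'in hm'].
    apply/DunionP; exists m' => //.
    by apply/flatten_mapP; exists n => //; rewrite mem_iota add0n.
  move/DunionP => [m /flatten_mapP [n]]; rewrite mem_iota add0n => /andP[_ ni] mb hx.
  have : @Dunion R (i + j) (blk R i j n) x by apply/DunionP; exists m.
  by rewrite -blk_eq // => -[].
split; first by exists s.
split.
  apply: le_outer_measure => x hx.
  have [/andP [x0 x1] _] := @Q_char R i j x hx.
  have K0 : 0 < (2 : R) ^+ (i + j) by apply: exprn_gt0; lra.
  have x0' : 0 <= x * 2 ^+ (i + j) by rewrite mulr_ge0 // ltW.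
  pose m := Num.trunc (x * 2 ^+ (i + j)).
  have hm := trunc_itv x0'; rewrite -/m in hm.
  have hxm : @Dint R (i + j) m x by apply/DintE.
  exists m; split; last split => //.
    rewrite -(ltr_nat R) natrX.
    move: hm => /andP[h _]; apply: (le_lt_trans h).
    by rewrite -[X in _ < X]mul1r ltr_pM2r.
  by exists x.
rewrite hQ; apply: le_trans (Dunion_meas _ _ _) _.
rewrite lee_fin.
have -> : (2 : R) ^- (i + j) = 2 ^- i * 2 ^- j by rewrite exprD invfM.
rewrite mulrA ler_pM2r ?invr_gt0 ?exprn_gt0 //.
have E0 : 0 < (2 : R) ^+ i by apply: exprn_gt0.
rewrite ler_pdivrMr // -natrX -natrM ler_nat //.
Qed.
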